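(* For every $\mu>0$: (i) $q_\mu:\mathbb{R}^n\to\mathbb{R}\cup\{\infty\}$ is proper and lower semicontinuous, with $\operatorname{dom} q_\mu=\operatorname{dom} g\cap\{z : c(z)<0\}$ and $\inf q_\mu\in\mathbb{R}$; (ii) $f_\mu$ has locally Lipschitz continuous gradient on $\operatorname{dom} f_\mu=\{z : c(z)<0\}$.
   Context: Let $f:\mathbb{R}^n\to\mathbb{R}$ have locally Lipschitz continuous gradient; let $g:\mathbb{R}^n\to\mathbb{R}\cup\{\infty\}$ be proper, lower semicontinuous, prox-bounded (i.e. $g+\frac{1}{2\gamma}\|\cdot\|^2$ is bounded below for some $\gamma>0$), and continuous relative to $\operatorname{dom} g$ (whenever $\operatorname{dom} g\ni x^k\to x$ one has $g(x^k)\to g(x)$); let $c:\mathbb{R}^n\to\mathbb{R}^m$ have locally Lipschitz continuous Jacobian. Let $q=f+g$, assume $\inf\{q(x): c(x)\le 0\}\in\mathbb{R}$ and that $F=\operatorname{dom} q\cap\{x: c(x)<0\}\neq\emptyset$. Let $b:\mathbb{R}\to[0,\infty]$ satisfy $\operatorname{dom} b=(-\infty,0)$, $b$ twice continuously differentiable with $b'>0$ on $(-\infty,0)$, and $b(t)\to\infty$ as $t\to0^-$. For $\mu>0$ define $f_\mu(z)=f(z)+\mu\sum_{i=1}^m b(c_i(z))$ (equal to $\infty$ unless $c(z)<0$) and $q_\mu=f_\mu+g$. *)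

(* Defs.v *)
(* R^n is modelled as row vectors 'rV[R]_n over R : realType. *)
From HB Require Import structures.
From mathcomp Require Import all_boot all_order all_algebra.
From mathcomp Require Import all_classical all_reals all_analysis.
Set Implicit Arguments. Unset Strict Implicit. Unset Printing Implicit Defensive.
Import Order.TTheory GRing.Theory Num.Theory.
Import numFieldNormedType.Exports.
Local Open Scope classical_set_scope.
Local Open Scope ring_scope.

Section Defs.
Variable R : realType.

Definition evec (n : nat) (i : 'I_n) : 'rV[R]_n := delta_mx 0 i.

(* gradient of f : R^n -> R at x (meaningful when f is differentiable at x) *)
Definition grad (n : nat) (f : 'rV[R]_n -> R) (x : 'rV[R]_n) : 'rV[R]_n :=
  \row_(i < n) ('d f x) (evec i).

Definition jacobian (n m : nat) (c : 'rV[R]_n -> 'rV[R]_m) (x : 'rV[R]_n)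
  : 'M[R]_(m, n) :=
  \matrix_(i < m, j < n) (('d c x) (evec j)) ord0 i.

Definition loc_lipschitz_on {U V : normedModType R} (A : set U) (F : U -> V) :=
  forall x, A x -> exists2 e : R, 0 < e &
    exists L : R, forall y z, ball x e y -> ball x e z -> A y -> A z ->
      `|F y - F z| <= L * `|y - z|.

Definition loc_lip_grad_on (n : nat) (A : set 'rV[R]_n) (f : 'rV[R]_n -> R) :=
  (forall x, A x -> differentiable f x) /\ loc_lipschitz_on A (grad f).

Definition loc_lip_jacobian (n m : nat) (c : 'rV[R]_n -> 'rV[R]_m) :=
  (forall x, differentiable c x) /\ loc_lipschitz_on setT (jacobian c).

Definition sqnorm (n : nat) (x : 'rV[R]_n) : R := \sum_(i < n) (x ord0 i) ^+ 2.

Definition edom (n : nat) (h : 'rV[R]_n -> \bar R) : set 'rV[R]_n :=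
  [set x | h x < +oo]%E.

Definition eproper (n : nat) (h : 'rV[R]_n -> \bar R) :=
  (forall x, h x != -oo)%E /\ exists x, (h x < +oo)%E.

Definition prox_bounded (n : nat) (g : 'rV[R]_n -> \bar R) :=
  exists2 gam : R, 0 < gam & exists beta : R,
    forall x, (beta%:E <= g x + (sqnorm x / (2 * gam))%:E)%E.

Definition cont_rel_dom (n : nat) (g : 'rV[R]_n -> \bar R) :=
  forall (u : nat -> 'rV[R]_n) (x : 'rV[R]_n),
    (forall k, edom g (u k)) -> u @ \oo --> x -> g \o u @ \oo --> g x.

Definition strict_feas (n m : nat) (c : 'rV[R]_n -> 'rV[R]_m) : set 'rV[R]_n :=
  [set z | forall i, c z ord0 i < 0].

Definition barrier (b : R -> \bar R) :=
  [/\ (forall t, (0 <= b t)%E),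
      (forall t, b t \is a fin_num <-> t < 0),
      (forall t, t < 0 -> [/\ derivable (fine \o b) t 1,
                             derivable (derive1 (fine \o b)) t 1 &
                             {for t, continuous (derive1 (derive1 (fine \o b)))}]),
      (forall t, t < 0 -> 0 < derive1 (fine \o b) t) &
      (b t @[t --> 0^'-] --> +oo%E)].

(* f_mu(z) = f(z) + mu * sum_i b(c_i(z))  (= +oo unless c(z) < 0) *)
Definition fmu (n m : nat) (f : 'rV[R]_n -> R) (c : 'rV[R]_n -> 'rV[R]_m)
  (b : R -> \bar R) (mu : R) (z : 'rV[R]_n) : \bar R :=
  ((f z)%:E + mu%:E * \sum_(i < m) b (c z ord0 i))%E.

Definition qmu (n m : nat) (f : 'rV[R]_n -> R) (g : 'rV[R]_n -> \bar R)
  (c : 'rV[R]_n -> 'rV[R]_m) (b : R -> \bar R) (mu : R) (z : 'rV[R]_n) : \bar R :=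
  (fmu f c b mu z + g z)%E.

End Defs.

(* Main.v *)
Require Import Defs.
From HB Require Import structures.
From mathcomp Require Import all_boot all_order all_algebra.
From mathcomp Require Import all_classical all_reals all_analysis.
From mathcomp Require Import ring lra.
Import Order.TTheory GRing.Theory Num.Theory.
Import numFieldNormedType.Exports.
Local Open Scope classical_set_scope.
Local Open Scope ring_scope.


Section Lsc.
Context {R : realType}.
Local Open Scope ereal_scope.

Lemma lsc_add (X : topologicalType) (F G : X -> \bar R) :
  (forall x, F x != -oo) -> (forall x, G x != -oo) ->
  lower_semicontinuous F -> lower_semicontinuous G ->
  lower_semicontinuous (fun x => F x + G x).
Proof.
move=> hF hG lF lG x a afx.
have [a1 [a2 [h1 h2 h3]]] : exists a1 a2 : R,
    [/\ a1%:E < F x, a2%:E < G x & (a <= a1 + a2)%R].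
  move: (hF x) (hG x) afx; case: (F x) => [r1| |] //; case: (G x) => [r2| |] // _ _.
  - rewrite -EFinD lte_fin => ha.
    exists (r1 - (r1 + r2 - a) / 2)%R, (r2 - (r1 + r2 - a) / 2)%R.
    by rewrite !lte_fin; split; lra.
  - move=> _; exists (r1 - 1)%R, (a - r1 + 1)%R; rewrite lte_fin ltry; split => //; lra.
  - move=> _; exists (a - r2 + 1)%R, (r2 - 1)%R; rewrite lte_fin ltry; split => //; lra.
  - by move=> _; exists a, 0%R; rewrite !ltry; split => //; lra.
have [V1 nV1 HV1] := lF x a1 h1.
have [V2 nV2 HV2] := lG x a2 h2.
exists (V1 `&` V2); first exact: filterI.
move=> y [/HV1 y1 /HV2 y2].
by apply: le_lt_trans (lteD y1 y2); rewrite -EFinD lee_fin.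
Qed.

Lemma lsc_scale (X : topologicalType) (F : X -> \bar R) (mu : R) :
  (0 < mu)%R -> lower_semicontinuous F ->
  lower_semicontinuous (fun x => mu%:E * F x).
Proof.
move=> mu0 lF x a; rewrite -lte_pdivrMl // -EFinM => /lF[V nV HV].
by exists V => // y /HV; rewrite -lte_pdivrMl // -EFinM.
Qed.

Lemma lsc_comp (X Y : topologicalType) (F : Y -> \bar R) (G : X -> Y) :
  continuous G -> lower_semicontinuous F ->
  lower_semicontinuous (fun x => F (G x)).
Proof.
move=> cG lF x a /lF[V nV HV].
exists (G @^-1` V); last by move=> y /HV.
exact: cG.
Qed.

Lemma lsc_EFin : lower_semicontinuous (fun t : R => t%:E).
Proof.
move=> t a; rewrite lte_fin => at_.
exists (fun s => a < s)%R; first exact: lt_nbhsr.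
by move=> y; rewrite lte_fin.
Qed.

Lemma lsc_cst (X : topologicalType) (k : \bar R) :
  lower_semicontinuous (fun _ : X => k).
Proof. by move=> x a h; exists setT => //; exact: filterT. Qed.

Lemma lsc_sum (X : topologicalType) (I : Type) (s : seq I) (F : I -> X -> \bar R) :
  (forall i x, 0 <= F i x) -> (forall i, lower_semicontinuous (F i)) ->
  lower_semicontinuous (fun x => \sum_(i <- s) F i x).
Proof.
move=> F0 lF; elim: s => [|j s IH].
  rewrite (_ : (fun x => _) = (fun _ => 0)); first exact: lsc_cst.
  by apply: funext => x; rewrite big_nil.
rewrite (_ : (fun x => _) = (fun x => F j x + \sum_(i <- s) F i x)); last first.
  by apply: funext => x; rewrite big_cons.
apply: lsc_add => //.
- by move=> x; rewrite -ltNye; apply: lt_le_trans (F0 j x).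
- move=> x; rewrite -ltNye; apply: lt_le_trans (sume_ge0 _ _) => // i _; exact: F0.
Qed.

End Lsc.
Arguments lsc_add {R X F G}.
Arguments lsc_scale {R X F mu}.
Arguments lsc_comp {R X Y F G}.
Arguments lsc_sum {R X I} s F.
Section Bar.
Context {R : realType} (b : R -> \bar R) (hb : barrier b).
Local Open Scope ereal_scope.

Lemma b_ge0 t : 0 <= b t. Proof. by case: hb. Qed.

Lemma b_finE t : (t < 0)%R -> b t = (fine (b t))%:E.
Proof. by move=> t0; case: hb => _ h _ _ _; rewrite fineK //; apply/h. Qed.

Lemma b_infty t : (0 <= t)%R -> b t = +oo.
Proof.
move=> t0; case: hb => h0 h _ _ _; move: (h0 t) (h t).
by case: (b t) => [r| |] //= _ [/(_ isT)]; rewrite ltNge t0.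
Qed.

Lemma b_cont t : (t < 0)%R -> {for t, continuous (fine \o b)}.
Proof.
move=> t0; case: hb => _ _ /(_ t t0)[d _ _] _ _.
by apply: differentiable_continuous; apply/derivable1_diffP.
Qed.

Local Close Scope ereal_scope.
Lemma lsc_b : lower_semicontinuous b.
Proof.
move=> t a.
case: (ltgtP t 0) => [t0|t0|->] hat.
- rewrite b_finE // lte_fin in hat.
  have hc := @b_cont t t0.
  have : \forall s \near t, (a < (fine \o b) s)%R /\ (s < 0)%R.
    apply: filterI; [exact: (hc _ (lt_nbhsr hat)) | exact: lt_nbhsl t0].
  move=> hV; exists (fun s => (a < (fine \o b) s)%R /\ (s < 0)%R) => //.
  by move=> y [h1 h2]; rewrite b_finE // lte_fin.
- exists (fun s => 0 < s)%R; first exact: lt_nbhsr.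
  by move=> y y0; rewrite b_infty ?ltry// ltW.
- case: hb => _ _ _ _ /cvgeyPgt /(_ a) hl.
  exists (fun s => (s < 0)%R -> (a%:E < b s)%E); first exact: hl.
  move=> y hy; case: (ltP y 0) => y0; first exact: hy.
  by rewrite b_infty ?ltry.
Qed.

End Bar.
Arguments b_ge0 {R b} hb t.
Arguments b_finE {R b} hb {t}.
Arguments b_infty {R b} hb {t}.
Arguments b_cont {R b} hb {t}.
Arguments lsc_b {R b} hb.

Section Part1.
Context {R : realType} (n m : nat) (f : 'rV[R]_n -> R) (g : 'rV[R]_n -> \bar R)
  (c : 'rV[R]_n -> 'rV[R]_m) (b : R -> \bar R) (hb : barrier b) (mu : R) (mu0 : 0 < mu).

Lemma fmu_fin z : strict_feas c z ->
  fmu f c b mu z = (f z + mu * \sum_(i < m) fine (b (c z ord0 i)))%:E.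
Proof.
move=> hz; rewrite /fmu.
under eq_bigr => i _ do rewrite (b_finE hb (hz i)).
by rewrite sumEFin -EFinM -EFinD.
Qed.

Lemma fmu_infty z : ~ strict_feas c z -> fmu f c b mu z = +oo%E.
Proof.
move=> hz.
have [i hi] : exists i, 0 <= c z ord0 i.
  apply/not_existsP => hn; apply: hz => i.
  by rewrite ltNge; apply/negP => h; apply: (hn i).
rewrite /fmu (bigD1 i) //= (b_infty hb hi) addye; last first.
  rewrite -ltNye; apply: (@lt_le_trans _ _ 0%E) => //.
  by apply: sume_ge0 => j _; exact: (b_ge0 hb).
by rewrite (@gt0_muley _ mu%:E) ?lte_fin // addey.
Qed.

Lemma fmu_ge z : ((f z)%:E <= fmu f c b mu z)%E.
Proof.
rewrite /fmu leeDl //; apply: mule_ge0; first by rewrite lee_fin ltW.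
by apply: sume_ge0 => j _; exact: (b_ge0 hb).
Qed.

Lemma fmu_neqNy z : fmu f c b mu z != -oo%E.
Proof. rewrite -ltNye; apply: (lt_le_trans _ (fmu_ge z)); exact: ltNyr. Qed.

Lemma fmu_ltyP z : (fmu f c b mu z < +oo)%E <-> strict_feas c z.
Proof.
split => [h|h]; last by rewrite fmu_fin // ltry.
apply/not_notP => hn; move: h; by rewrite fmu_infty.
Qed.

Lemma lsc_fmu : (forall x, differentiable f x) -> (forall x, differentiable c x) ->
  lower_semicontinuous (fmu f c b mu).
Proof.
move=> df dc.
have cf : continuous f by move=> x; apply: differentiable_continuous.
have cc : forall i, continuous (fun z => c z ord0 i).
  move=> i x; apply: (@continuous_comp _ _ _ c (fun M : 'rV[R]_m => M ord0 i)).
    exact: differentiable_continuous.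
  exact: coord_continuous.
apply: lsc_add.
- by [].
- move=> x; rewrite -ltNye; apply: (@lt_le_trans _ _ 0%E) => //.
  apply: mule_ge0; first by rewrite lee_fin ltW.
  by apply: sume_ge0 => j _; exact: (b_ge0 hb).
- exact: (lsc_comp cf lsc_EFin).
- apply: lsc_scale => //.
  apply: (lsc_sum _ (fun i z => b (c z ord0 i))).
    by move=> i x; exact: (b_ge0 hb).
  by move=> i; apply: lsc_comp (cc i) (lsc_b hb).
Qed.

End Part1.
Arguments fmu_fin {R n m f c b} hb {mu z}.
Arguments fmu_infty {R n m f c b} hb {mu} mu0 {z}.
Arguments fmu_ge {R n m f c b} hb {mu} mu0 z.
Arguments fmu_neqNy {R n m f c b} hb {mu} mu0 z.
Arguments fmu_ltyP {R n m f c b} hb {mu} mu0 z.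
Arguments lsc_fmu {R n m f c b} hb {mu} mu0.

Section Ereal_aux.
Context {R : realType}.
Local Open Scope ereal_scope.
Lemma addNy_ne (x y : \bar R) : x != -oo -> y != -oo -> x + y != -oo.
Proof. by case: x => [r| |]; case: y => [s| |]. Qed.
Lemma add_ltyP (x y : \bar R) : x != -oo -> y != -oo ->
  (x + y < +oo) <-> (x < +oo /\ y < +oo).
Proof. by case: x => [r| |]; case: y => [s| |] //= _ _; rewrite ?ltry; split => // -[]. Qed.
End Ereal_aux.


Section Lip.
Context {R : realType}.

Lemma mx_entry_le {p q} (M : 'M[R]_(p, q)) i j : `|M i j| <= `|M|.
Proof.
rewrite [leRHS]/Num.Def.normr/= mx_normrE.
by apply: le_trans (le_bigmax _ _ (i, j)).
Qed.

Lemma mx_norm_le {p q} (M : 'M[R]_(p, q)) K : 0 <= K ->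
  (forall i j, `|M i j| <= K) -> `|M| <= K.
Proof.
move=> K0 hK; rewrite [leLHS]/Num.Def.normr/= mx_normrE (bigmax_le _ K0) // => -[i j] _.
Qed.

Context {V : normedModType R}.

Definition lipat (x : V) (F : V -> R) := exists e L : R, [/\ 0 < e, 0 <= L &
  forall y z, `|y - x| < e -> `|z - x| < e -> `|F y - F z| <= L * `|y - z|].

Definition lip1 (t : R) (G : R -> R) := exists d K : R, [/\ 0 < d, 0 <= K &
  forall s u, `|s - t| < d -> `|u - t| < d -> `|G s - G u| <= K * `|s - u|].

Lemma lipat_bound {x F} : lipat x F -> exists e M : R, 0 < e /\
  forall y, `|y - x| < e -> `|F y| <= M.
Proof.
move=> [e [L [e0 L0 h]]]; exists e, (`|F x| + L * e); split => // y hy.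
have -> : F y = F x + (F y - F x) by rewrite addrC subrK.
apply: le_trans (ler_normD _ _) _; rewrite lerD2l.
apply: le_trans (h y x hy _) _; first by rewrite subrr normr0.
by rewrite ler_wpM2l // ltW.
Qed.

Lemma lipat_cst x (k : R) : lipat x (fun _ => k).
Proof.
exists 1, 0; split => // y z _ _; by rewrite subrr normr0 mul0r.
Qed.

Lemma lipat_add {x F G} : lipat x F -> lipat x G -> lipat x (fun y => F y + G y).
Proof.
move=> [e1 [L1 [e10 L10 h1]]] [e2 [L2 [e20 L20 h2]]].
exists (Num.min e1 e2), (L1 + L2); split.
- by rewrite lt_min e10 e20.
- by rewrite addr_ge0.
- move=> y z; rewrite !lt_min => /andP[y1 y2] /andP[z1 z2].
  rewrite (_ : F y + G y - (F z + G z) = (F y - F z) + (G y - G z)); last first.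
    by rewrite opprD addrACA.
  rewrite mulrDl; apply: le_trans (ler_normD _ _) _; apply: lerD; [exact: h1|exact: h2].
Qed.

Lemma lipat_mul {x F G} : lipat x F -> lipat x G -> lipat x (fun y => F y * G y).
Proof.
move=> hF hG.
have [eb1 [M1 [eb10 hM1]]] := lipat_bound hF.
have [eb2 [M2 [eb20 hM2]]] := lipat_bound hG.
move: hF hG => [e1 [L1 [e10 L10 h1]]] [e2 [L2 [e20 L20 h2]]].
have M10 : 0 <= M1 by apply: le_trans (hM1 x _); rewrite ?subrr ?normr0.
have M20 : 0 <= M2 by apply: le_trans (hM2 x _); rewrite ?subrr ?normr0.
exists (Num.min (Num.min e1 e2) (Num.min eb1 eb2)), (M1 * L2 + M2 * L1); split.
- by rewrite !lt_min e10 e20 eb10 eb20.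
- by rewrite addr_ge0 // mulr_ge0.
- move=> y z; rewrite !lt_min => /andP[/andP[y1 y2] /andP[y3 y4]] /andP[/andP[z1 z2] /andP[z3 z4]].
  rewrite (_ : F y * G y - F z * G z = F y * (G y - G z) + G z * (F y - F z)); last by ring.
  apply: le_trans (ler_normD _ _) _; rewrite mulrDl !normrM.
  apply: lerD; rewrite -mulrA; apply: ler_pM => //; [exact: hM1|exact: h2|exact: hM2|exact: h1].
Qed.

Lemma lipat_sum x (I : Type) (s : seq I) (F : I -> V -> R) :
  (forall i, lipat x (F i)) -> lipat x (fun y => \sum_(i <- s) F i y).
Proof.
move=> hF; elim: s => [|j s IH].
  have -> : (fun y => \sum_(i <- [::]) F i y) = (fun _ => 0) by apply: funext => y; rewrite big_nil.
  exact: lipat_cst.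
have -> : (fun y => \sum_(i <- j :: s) F i y) = (fun y => F j y + \sum_(i <- s) F i y).
  by apply: funext => y; rewrite big_cons.
exact: lipat_add.
Qed.

Lemma lipat_comp {x F} {G : R -> R} : lipat x F -> lip1 (F x) G -> lipat x (fun y => G (F y)).
Proof.
move=> [e [L [e0 L0 h]]] [d [K [d0 K0 hG]]].
have L1 : 0 < L + 1 by lra.
exists (Num.min e (d / (L + 1))), (K * L); split.
- by rewrite lt_min e0 divr_gt0.
- exact: mulr_ge0.
- have key : forall y, `|y - x| < Num.min e (d / (L + 1)) -> `|F y - F x| < d.
    move=> y; rewrite lt_min => /andP[y1 y2].
    apply: le_lt_trans (h y x y1 _) _; first by rewrite subrr normr0.
    apply: (@le_lt_trans _ _ (L * (d / (L + 1)))); first by rewrite ler_wpM2l // ltW.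
    rewrite mulrA ltr_pdivrMr //; nra.
  move=> y z hy hz.
  apply: le_trans (hG _ _ (key y hy) (key z hz)) _.
  rewrite -mulrA ler_wpM2l //; apply: h.
    by move: hy; rewrite lt_min => /andP[].
  by move: hz; rewrite lt_min => /andP[].
Qed.

Lemma lipat_forall x k (F : 'I_k -> V -> R) : (forall j, lipat x (F j)) ->
  exists e L : R, [/\ 0 < e, 0 <= L & forall j y z, `|y - x| < e -> `|z - x| < e ->
    `|F j y - F j z| <= L * `|y - z|].
Proof.
elim: k F => [|k IH] F hF.
  by exists 1, 0; split => // -[].
have [e1 [L1 [e10 L10 h1]]] := IH (fun j => F (lift ord0 j)) (fun j => hF _).
have [e2 [L2 [e20 L20 h2]]] := hF ord0.
exists (Num.min e1 e2), (L1 + L2); split.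
- by rewrite lt_min e10 e20.
- by rewrite addr_ge0.
- move=> j y z; rewrite !lt_min => /andP[y1 y2] /andP[z1 z2].
  have hn : 0 <= `|y - z| by [].
  case: (unliftP ord0 j) => [j' ->|->].
    apply: le_trans (h1 j' y z y1 z1) _; rewrite ler_wpM2r //; lra.
  apply: le_trans (h2 y z y2 z2) _; rewrite ler_wpM2r //; lra.
Qed.

End Lip.

Section Lip1.
Context {R : realType}.

Lemma lip1_C1 (H : R -> R) (t : R) : t < 0 ->
  (forall s, s < 0 -> derivable H s 1) -> {for t, continuous (derive1 H)} -> lip1 t H.
Proof.
move=> t0 hder hc.
have /nbhs_ballP[d1 d10 hd1] : \forall s \near t, `|derive1 H t - derive1 H s| < 1.
  exact: (@cvgr_dist_lt _ _ _ _ _ (derive1 H) (derive1 H t) hc 1 ltr01).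
set K := `|(derive1 H) t| + 1.
set d := Num.min d1 (- t).
have d0 : 0 < d by rewrite lt_min d10 oppr_gt0.
have hdt : forall s, `|s - t| < d -> [/\ s < 0, t - d1 < s & s < t + d1].
  move=> s; rewrite lt_min => /andP[]; rewrite !ltr_distl => /andP[h1 h2] /andP[h3 h4].
  split => //; lra.
have main : forall a b, a <= b -> `|a - t| < d -> `|b - t| < d ->
    `|H b - H a| <= K * (b - a).
  move=> a b ab /hdt[a0 a1 a2] /hdt[b0 b1 b2].
  have hin : forall x, x \in `[a, b] -> x < 0.
    by move=> x; rewrite in_itv /= => /andP[_ xb]; lra.
  have [ci ciab ->] : exists2 ci, ci \in `[a, b] & H b - H a = 'D_1 H ci * (b - a).
    apply: MVT_segment => //.
      move=> x xab; apply: derivableP; apply: hder; apply: hin.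
      by move: xab; rewrite !in_itv /= => /andP[? ?]; apply/andP; split; apply: ltW.
    apply: derivable_within_continuous => x xab; exact: hder (hin x xab).
  rewrite normrM (ger0_norm (_ : 0 <= b - a)); last by lra.
  rewrite ler_wpM2r //; first by lra.
  rewrite -derive1E.
  move: ciab; rewrite in_itv /= => /andP[c1 c2].
  have : ball t d1 ci by rewrite -ball_normE /ball_ /= ltr_distlC; apply/andP; split; lra.
  move/hd1 => /= hci.
  have -> : (derive1 H) ci = (derive1 H) t - ((derive1 H) t - (derive1 H) ci) by rewrite opprB addrC subrK.
  apply: le_trans (ler_normB _ _) _; rewrite /K lerD2l; exact: ltW.
exists d, K; split => //; first by rewrite /K; apply: addr_ge0.
move=> s u hs hu; case: (leP s u) => su.
  rewrite (distrC (H s)) (distrC s).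
  have -> : `|u - s| = u - s by apply: ger0_norm; rewrite subr_ge0.
  exact: main.
have -> : `|s - u| = s - u by apply: gtr0_norm; rewrite subr_gt0.
by apply: main => //; apply: ltW.
Qed.

End Lip1.
Section DiffAux.
Context {R : realType}.

Lemma near_eq_diff (V W : normedModType R) (F G : V -> W) (x : V) :
  (\forall z \near x, F z = G z) -> differentiable G x ->
  differentiable F x /\ 'd F x = 'd G x :> (V -> W).
Proof.
move=> hFG dG.
have hx : F x = G x by apply: nbhs_singleton hFG.
have e1 : F \o shift x = cst (F x) + 'd G x +o_ 0 id.
  apply/eqaddoP => eps eps0.
  have /eqaddoP /(_ eps eps0) := diff_locally dG.
  move=> hG.
  have hs : \forall h \near 0, F (h + x) = G (h + x).
    move/nbhs_ballP : hFG => [e e0 he]; apply/nbhs_ballP; exists e => // h hb.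
    apply: he; move: hb; rewrite -!ball_normE /ball_ /= sub0r normrN => hb.
    by rewrite (_ : x - (h + x) = - h) ?normrN // opprD addrCA subrr addr0.
  near=> h.
  have -> : (F \o shift x - (cst (F x) + 'd G x)) h
           = (G \o shift x - (cst (G x) + 'd G x)) h.
    by rewrite /= hx !fctE /= (near hs h).
  by near: h.
have dF : 'd F x = 'd G x :> (V -> W).
  by apply: diff_unique => //; exact: diff_continuous.
split => //; apply/diff_locallyP; rewrite dF; split => //; exact: diff_continuous.
Unshelve. all: by end_near. Qed.

Lemma diff_sum (V W : normedModType R) (I : Type) (s : seq I) (F : I -> V -> W) x :
  (forall i, differentiable (F i) x) ->
  differentiable (fun z => \sum_(i <- s) F i z) x /\
  'd (fun z => \sum_(i <- s) F i z) x = (fun v => \sum_(i <- s) 'd (F i) x v) :> (V -> W).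
Proof.
move=> dF; elim: s => [|j s [IH1 IH2]].
  have -> : (fun z => \sum_(i <- [::]) F i z) = cst 0 by apply: funext => z; rewrite big_nil.
  split; first exact: differentiable_cst.
  by rewrite diff_cst; apply: funext => v; rewrite big_nil.
have -> : (fun z => \sum_(i <- j :: s) F i z) = F j + (fun z => \sum_(i <- s) F i z).
  by apply: funext => z; rewrite big_cons.
split; first exact: differentiableD.
rewrite diffD; [|exact: dF|exact: IH1].
apply: funext => v; rewrite [RHS]big_cons; congr (_ + _); by rewrite IH2.
Qed.

Lemma diff_entry {V : normedModType R} {p q} {F : V -> 'M[R]_(p, q)} {x} i j :
  differentiable F x ->
  differentiable (fun z => F z i j) x /\
  'd (fun z => F z i j) x = (fun v => 'd F x v i j) :> (V -> R).
Proof.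
move=> dF.
have @L : {linear 'M[R]_(p, q) -> R}.
  by exists (fun N : 'M[R]_(_, _) => N i j); do 2![eexists]; do ?[constructor];
     rewrite ?mxE// => ? *; rewrite ?mxE//; move=> ?; rewrite !mxE.
have cL : continuous L by exact: coord_continuous.
have -> : (fun z => F z i j) = L \o F by [].
split; first by apply: differentiable_comp => //; exact: linear_differentiable.
by rewrite diff_comp //; [rewrite diff_lin | exact: linear_differentiable].
Qed.

End DiffAux.

Section CLip.
Context {R : realType} {n m : nat} (c : 'rV[R]_n -> 'rV[R]_m).
Hypothesis hdc : forall x, differentiable c x.
Hypothesis hJ : loc_lipschitz_on setT (Defs.jacobian c).

Lemma c_lipat x i : lipat x (fun y => c y ord0 i).
Proof.
have [e e0 [L hL]] := hJ x I.
set J := Defs.jacobian c.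
set M := `|J x| + `|L| * e.
have M0 : 0 <= M by rewrite addr_ge0 // mulr_ge0 // ltW.
have hJb : forall w, `|w - x| < e -> forall j, `|('d c w (evec R j)) ord0 i| <= M.
  move=> w hw j.
  have -> : ('d c w (evec R j)) ord0 i = J w i j by rewrite /J /Defs.jacobian mxE.
  apply: le_trans (mx_entry_le _ _ _) _.
  have -> : J w = J x + (J w - J x) by rewrite addrC subrK.
  apply: le_trans (ler_normD _ _) _; rewrite lerD2l.
  apply: le_trans (hL w x _ _ I I) _.
  - by rewrite -ball_normE /ball_ /= distrC.
  - by rewrite -ball_normE /ball_ /= subrr normr0.
  apply: le_trans (ler_norm _) _ ; rewrite normrM normr_id.
  by rewrite ler_wpM2l // ltW.
have hdv : forall w v, `|w - x| < e -> `|('d c w v) ord0 i| <= (M *+ n) * `|v|.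
  move=> w v hw.
  rewrite {1}(row_sum_delta v) linear_sum summxE.
  apply: le_trans (ler_norm_sum _ _ _) _.
  apply: (@le_trans _ _ (\sum_(j < n) `|v| * M)).
    apply: ler_sum => j _; rewrite linearZ mxE normrM.
    apply: ler_pM => //; first exact: mx_entry_le.
    exact: hJb.
  by rewrite sumr_const card_ord mulrnAl mulrC.
exists (e / 3), (M *+ n); split.
- by rewrite divr_gt0.
- by rewrite mulrn_wge0.
move=> y z hy hz.
set v := y - z.
set p := fun s : R => z + s *: v.
have dp : forall s, differentiable p s /\ 'd p s = (fun r => r *: v) :> (R -> 'rV_n).
  move=> s; have hp : p = cst z + ( *:%R^~ v) by apply: funext.
  have H := is_diffD (is_diff_cst z s) (is_diff_scalel s v).
  rewrite hp; split; first exact: (ex_diff (is_diff_def:=H)).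
  rewrite (diff_val (is_diff_def := H)); apply: funext => r; exact: add0r.
set phi := fun s => c (p s) ord0 i.
have dphi : forall s, differentiable phi s /\ 'D_1 phi s = ('d c (p s) v) ord0 i.
  move=> s; have [dps hdps] := dp s.
  have dcp : differentiable (c \o p) s by apply: differentiable_comp.
  have [h1 h2] := diff_entry ord0 i dcp.
  split; first exact: h1.
  rewrite deriveE // h2 diff_comp // hdps /=; by rewrite scale1r.
have [t tin ht] : exists2 t, t \in `[0, 1] & phi 1 - phi 0 = 'D_1 phi t * (1 - 0).
  apply: MVT_segment => //.
    by move=> s _; apply: derivableP; apply: diff_derivable; case: (dphi s).
  apply: continuous_subspaceT => s; apply: differentiable_continuous; by case: (dphi s).
have hp1 : phi 1 = c y ord0 i by rewrite /phi /p scale1r /v addrC subrK.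
have hp0 : phi 0 = c z ord0 i by rewrite /phi /p scale0r addr0.
rewrite -hp1 -hp0 ht subr0 mulr1 (dphi t).2.
apply: hdv.
move: tin; rewrite in_itv /= => /andP[t0 t1].
have -> : p t - x = (z - x) + t *: v by rewrite /p addrAC.
apply: le_lt_trans (ler_normD _ _) _.
rewrite normrZ ger0_norm //.
have hv : `|v| <= `|y - x| + `|z - x|.
  by rewrite /v (_ : y - z = (y - x) - (z - x)) ?ler_normB // opprB addrA subrK.
have : t * `|v| <= `|v| by rewrite ler_piMl.
lra.
Qed.

End CLip.

Lemma lipat_of_mx (R : realType) n p q (M : 'rV[R]_n -> 'M[R]_(p, q)) x :
  (exists2 e : R, 0 < e & exists L : R, forall y z, ball x e y -> ball x e z ->
     setT y -> setT z -> `|M y - M z| <= L * `|y - z|) ->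
  forall i j, lipat x (fun y => M y i j).
Proof.
move=> [e e0 [L hL]] i j; exists e, `|L|; split => // y z hy hz.
have -> : M y i j - M z i j = (M y - M z) i j by rewrite !mxE.
apply: le_trans (mx_entry_le _ i j) _.
apply: le_trans (hL y z _ _ I I) _.
- by rewrite -ball_normE /ball_ /= distrC.
- by rewrite -ball_normE /ball_ /= distrC.
by rewrite ler_wpM2r // ler_norm.
Qed.

Lemma le_of_eq2 (R : realType) (a b c d K : R) : a = c -> b = d ->
  `|c - d| <= K -> `|a - b| <= K.
Proof. by move=> -> ->. Qed.

Lemma part2 (R : realType) (n m : nat)
  (f : 'rV[R]_n -> R) (c : 'rV[R]_n -> 'rV[R]_m) (b : R -> \bar R) (mu : R) :
  loc_lip_grad_on setT f -> loc_lip_jacobian c -> barrier b -> 0 < mu ->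
  loc_lip_grad_on (strict_feas c) (fun z => fine (fmu f c b mu z)).
Proof.
move=> [hdf hgf] [hdc hJ] hb mu0.
set beta := fine \o b.
set S := strict_feas c.
set F0 := fun z => fine (fmu f c b mu z).
set h := fun z => f z + mu * \sum_(i < m) beta (c z ord0 i).
have hcc : forall i, continuous (fun z => c z ord0 i).
  move=> i x; apply: (@continuous_comp _ _ _ c (fun M : 'rV[R]_m => M ord0 i)).
    exact: differentiable_continuous.
  exact: coord_continuous.
have hSnear : forall y, S y -> \forall z \near y, S z.
  move=> y hy.
  have H : \forall z \near y, forall i, c z ord0 i < 0.
    apply: (@filter_forall _ 'I_m (fun i z => c z ord0 i < 0) (nbhs y) (nbhs_filter y)) => i.
    exact: (hcc i y _ (lt_nbhsl (hy i))).
  by apply: filterS H => z hz i; exact: hz i.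
have hFh : forall y, S y -> \forall z \near y, F0 z = h z.
  move=> y hy; apply: filterS (hSnear y hy) => z hz.
  by rewrite /F0 (fmu_fin hb hz).
have hbd : forall t, t < 0 -> derivable beta t 1.
  move=> t t0; case: hb => _ _ /(_ t t0) [hd _ _] _ _; exact: hd.
have dk : forall y i, c y ord0 i < 0 ->
    (differentiable (fun z => beta (c z ord0 i)) y) /\
    ('d (fun z => beta (c z ord0 i)) y = (fun v => ('d c y v) ord0 i * derive1 beta (c y ord0 i)) :> ('rV[R]_n -> R)).
  move=> y i hyi.
  have [d1 e1] := diff_entry ord0 i (hdc y).
  have db : differentiable beta (c y ord0 i) by apply/derivable1_diffP; apply: hbd.
  have -> : (fun z => beta (c z ord0 i)) = beta \o (fun z => c z ord0 i) by [].
  split; first exact: differentiable_comp.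
  rewrite diff_comp // deriv1E; last exact: hbd.
  rewrite e1; apply: funext => v /=. done.
have dh : forall y, S y -> (differentiable h y) /\
    ('d h y = (fun v => 'd f y v + mu * \sum_(i < m) (('d c y v) ord0 i * derive1 beta (c y ord0 i))) :> ('rV[R]_n -> R)).
  move=> y hy.
  have [ds es] := diff_sum _ _ _ (index_enum 'I_m) (fun i z => beta (c z ord0 i)) y (fun i => (dk y i (hy i)).1).
  have hh : h = f + mu *: (fun z => \sum_(i <- index_enum 'I_m) beta (c z ord0 i)) by apply: funext.
  have dfy : differentiable f y := hdf y I.
  have dsz := differentiableZ mu ds.
  rewrite hh; split; first exact: differentiableD.
  rewrite diffD; [|exact: dfy|exact: dsz].
  rewrite diffZ; last exact: ds.
  rewrite es; apply: funext => v /=.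
  congr (_ + _); congr (_ * _); apply: eq_bigr => i _.
  by rewrite (dk y i (hy i)).2.
have hF0 : forall y, S y -> (differentiable F0 y) /\ ('d F0 y = 'd h y :> ('rV[R]_n -> R)).
  by move=> y hy; exact: (near_eq_diff _ _ F0 h y (hFh y hy) (dh y hy).1).
set G := fun (j : 'I_n) y => 'd f y (evec R j) +
  mu * \sum_(i < m) (Defs.jacobian c y i j * derive1 beta (c y ord0 i)).
have grad_eq : forall y, S y -> forall j, 'd F0 y (evec R j) = G j y.
  move=> y hy j; rewrite (hF0 y hy).2 (dh y hy).2 /G.
  congr (_ + _ * _); apply: eq_bigr => i _; by rewrite /Defs.jacobian mxE.
have grad_eq2 : forall y, S y -> forall j, grad F0 y ord0 j = G j y.
  move=> y hy j; rewrite -grad_eq //; exact: mxE.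
have lipG : forall x, S x -> forall j, lipat x (G j).
  move=> x hx j.
  have l1 : lipat x (fun y => 'd f y (evec R j)).
    have -> : (fun y => 'd f y (evec R j)) = (fun y => grad f y ord0 j).
      by apply: funext => y; rewrite /grad mxE.
    exact: (lipat_of_mx _ _ _ _ (grad f) x (hgf x I) ord0 j).
  have l2 : forall i, lipat x (fun y => Defs.jacobian c y i j).
    move=> i; exact: (lipat_of_mx _ _ _ _ (Defs.jacobian c) x (hJ x I) i j).
  have l3 : forall i, lipat x (fun y => derive1 beta (c y ord0 i)).
    move=> i; apply: (lipat_comp (c_lipat c hdc hJ x i)).
    apply: lip1_C1 (hx i) _ _.
    - move=> s s0; case: hb => _ _ /(_ s s0) [_ hd _] _ _; exact: hd.
    - case: hb => _ _ /(_ _ (hx i)) [_ _ hc] _ _; exact: hc.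
  apply: (lipat_add l1); apply: (lipat_mul (lipat_cst _ _)).
  apply: (lipat_sum _ _ (index_enum 'I_m) (fun i y => Defs.jacobian c y i j * derive1 beta (c y ord0 i))) => i.
  exact: (lipat_mul (l2 i) (l3 i)).
split.
  by move=> x hx; exact: (hF0 x hx).1.
move=> x hx.
have [e [L [e0 L0 hL]]] := lipat_forall x n G (lipG x hx).
exists e => //; exists L => y z hy hz Sy Sz.
apply: mx_norm_le; first by rewrite mulr_ge0.
move=> i j; rewrite (ord1 i).
have -> : (grad F0 y - grad F0 z) ord0 j = grad F0 y ord0 j - grad F0 z ord0 j.
  rewrite mxE. congr (_ + _). rewrite mxE. done.
have -> : grad F0 y ord0 j - grad F0 z ord0 j = G j y - G j z.
  by congr (_ - _); [exact: grad_eq2 | exact: grad_eq2].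
apply: hL.
- by move: hy; rewrite -ball_normE /ball_ /= distrC.
- by move: hz; rewrite -ball_normE /ball_ /= distrC.
Qed.

Theorem lemma3p2 (R : realType) (n m : nat)
  (f : 'rV[R]_n -> R) (g : 'rV[R]_n -> \bar R) (c : 'rV[R]_n -> 'rV[R]_m)
  (b : R -> \bar R) :
  loc_lip_grad_on setT f ->
  (forall x, g x != -oo%E) -> eproper g -> lower_semicontinuous g ->
  prox_bounded g -> cont_rel_dom g ->
  loc_lip_jacobian c ->
  ereal_inf [set ((f x)%:E + g x)%E | x in [set x | forall i, c x ord0 i <= 0]]
    \is a fin_num ->
  (exists x, edom g x /\ strict_feas c x) ->
  barrier b ->
  forall mu : R, 0 < mu ->
    (eproper (qmu f g c b mu) /\ lower_semicontinuous (qmu f g c b mu) /\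
     edom (qmu f g c b mu) = edom g `&` strict_feas c /\
     ereal_inf (range (qmu f g c b mu)) \is a fin_num) /\
    (edom (fmu f c b mu) = strict_feas c /\
     loc_lip_grad_on (strict_feas c) (fun z => fine (fmu f c b mu z))).
Proof.
move=> hf hg0 _ hlsc _ _ hc hinf [x1 [hx1g hx1c]] hb mu mu0.
have hdf : forall x, differentiable f x by move=> x; case: hf => h _; exact: h.
have hdc : forall x, differentiable c x by case: hc.
have edq : forall z, (qmu f g c b mu z < +oo)%E <-> (g z < +oo)%E /\ strict_feas c z.
  move=> z; rewrite /qmu add_ltyP ?(fmu_neqNy hb mu0) // (fmu_ltyP hb mu0); tauto.
split; last first.
  split; last exact: part2.
  by apply/seteqP; split => z /=; rewrite /edom /= (fmu_ltyP hb mu0).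
split.
  split; first by move=> x; rewrite /qmu addNy_ne ?(fmu_neqNy hb mu0).
  by exists x1; apply/edq.
split. apply: lsc_add => [x|x||//]; [by rewrite (fmu_neqNy hb mu0) | by rewrite hg0 | exact: (lsc_fmu hb mu0 hdf hdc)].
split.
  by apply/seteqP; split => z /=; rewrite /edom /= edq.
set S := [set _ | _ in _] in hinf.
have h1 : (ereal_inf S <= ereal_inf (range (qmu f g c b mu)))%E.
  apply/ereal_infP => _ [z _ <-].
  have [hz|hz] := pselect (strict_feas c z).
    apply: (@le_trans _ _ ((f z)%:E + g z)%E).
      apply: ereal_inf_lbound; exists z => // i; exact: ltW.
    by rewrite /qmu leeD2r // (fmu_ge hb mu0).
  by rewrite /qmu (fmu_infty hb mu0) // addye ?leey.
have h2 : (ereal_inf (range (qmu f g c b mu)) < +oo)%E.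
  apply: (@le_lt_trans _ _ (qmu f g c b mu x1)); first by apply: ereal_inf_lbound; exists x1.
  by apply/edq.
rewrite fin_numE -ltNye -ltey h2 andbT.
apply: lt_le_trans h1; rewrite ltNye.
by move: hinf; rewrite fin_numE => /andP[].
Qed.
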